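(* Let $\Sigma$ be a flag complex on $[n]$ and let $\ell$ be a positive integer. Let $\Delta$ and $\Delta'$ be the simplicial complexes (collections of subsets of $[n]$ closed under taking subsets) defined by $I_\Delta=I(\overline{\mathrm{skel}_\Sigma(\ell)})$ and $I_{\Delta'}=I(\overline{\mathrm{skel}_\Sigma(1)})$. If $I_{\Delta'}$ has linear quotients, then so does $I_\Delta$.
   Context: $S=K[x_1,\ldots,x_n]$ over a field $K$, $x_F=\prod_{i\in F}x_i$. For a simplicial complex $\Gamma$, $I_\Gamma$ (Stanley–Reisner ideal) is generated by all $x_F$ with $F\notin\Gamma$, and $I(\Gamma)$ (facet ideal) by the $x_F$ with $F$ a facet of $\Gamma$. $\Sigma$ is flag if all minimal nonfaces have two elements (the simplex counts as flag). For $k\geq1$, $\overline{\mathrm{skel}_\Sigma(k)}$ is the complex whose facets are the $(k+1)$-subsets of $[n]$ not in $\Sigma$. A monomial ideal has linear quotients if its minimal monomial generators can be ordered $f_1,\ldots,f_m$ so that for each $i>1$ the colon ideal $(f_1,\ldots,f_{i-1}):f_i$ is generated by variables. *)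

(* Defs.v *)
From mathcomp Require Import all_boot all_algebra.
From mathcomp Require Import mpoly.

Set Implicit Arguments.
Unset Strict Implicit.
Unset Printing Implicit Defensive.

Import GRing.Theory.
Local Open Scope ring_scope.

Section Defs.
Variables (K : fieldType) (n : nat).

(* Vertex set [n] is modelled by 'I_n; a collection of subsets is a {set {set 'I_n}}. *)
Definition simplicial_complex (G : {set {set 'I_n}}) : Prop :=
  forall F H : {set 'I_n}, F \in G -> H \subset F -> H \in G.

Definition is_flag (G : {set {set 'I_n}}) : Prop :=
  simplicial_complex G /\
  forall F : {set 'I_n}, F \notin G ->
    (forall H : {set 'I_n}, H \proper F -> H \in G) -> #|F| = 2.

Definition facets (G : {set {set 'I_n}}) : {set {set 'I_n}} :=
  [set F in G | [forall H, (H \in G) ==> ~~ (F \proper H)]].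

Definition skel_bar (Sigma : {set {set 'I_n}}) (k : nat) : {set {set 'I_n}} :=
  [set H : {set 'I_n} | [exists F : {set 'I_n}, [&& #|F| == k.+1, F \notin Sigma & H \subset F]]].

Definition xF (F : {set 'I_n}) : {mpoly K[n]} := \prod_(i in F) 'X_i.

Definition ideal_gen (gs : seq {mpoly K[n]}) : {mpoly K[n]} -> Prop :=
  fun p => exists cs : seq {mpoly K[n]}, p = \sum_(i < size gs) cs`_i * gs`_i.

Definition SR_ideal (G : {set {set 'I_n}}) : {mpoly K[n]} -> Prop :=
  ideal_gen [seq xF F | F in ~: G].

Definition facet_ideal (G : {set {set 'I_n}}) : {mpoly K[n]} -> Prop :=
  ideal_gen [seq xF F | F in facets G].

Definition is_monomial (p : {mpoly K[n]}) : Prop :=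
  exists m : 'X_{1..n}, p = 'X_[m].

Definition pdvd (q p : {mpoly K[n]}) : Prop := exists r, p = r * q.

Definition colon (gs : seq {mpoly K[n]}) (f : {mpoly K[n]}) : {mpoly K[n]} -> Prop :=
  fun p => ideal_gen gs (p * f).

Definition gen_by_variables (J : {mpoly K[n]} -> Prop) : Prop :=
  exists vs : seq 'I_n, forall p, J p <-> ideal_gen [seq 'X_v | v <- vs] p.

Definition linear_quotients (I : {mpoly K[n]} -> Prop) : Prop :=
  exists fs : seq {mpoly K[n]},
    [/\ uniq fs,
        forall i, (i < size fs)%N -> is_monomial fs`_i,
        forall i j, (i < size fs)%N -> (j < size fs)%N -> i != j -> ~ pdvd fs`_j fs`_i,
        forall p, I p <-> ideal_gen fs p &
        forall i, (0 < i < size fs)%N -> gen_by_variables (colon (take i fs) fs`_i)].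

End Defs.
Arguments SR_ideal K {n} G.
Arguments facet_ideal K {n} G.
Arguments linear_quotients {K n} I.

(* Main.v *)
Require Import Defs.
From mathcomp Require Import all_boot all_algebra.
From mathcomp Require Import mpoly.

Set Implicit Arguments.
Unset Strict Implicit.
Unset Printing Implicit Defensive.
Import GRing.Theory.
Local Open Scope ring_scope.
From mathcomp Require Import zify.
Section Basics.
Variables (K : fieldType) (n : nat).
Local Notation P := {mpoly K[n]}.
Implicit Types (gs hs : seq P) (p q : P).

Lemma ig0 gs : ideal_gen gs 0.
Proof. by exists [::]; rewrite big1 // => i _; rewrite nth_nil mul0r. Qed.

Lemma igD gs p q : ideal_gen gs p -> ideal_gen gs q -> ideal_gen gs (p + q).
Proof.
move=> [cs ->] [ds ->]; exists [seq cs`_i + ds`_i | i <- iota 0 (size gs)].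
rewrite -big_split /=; apply: eq_bigr => i _.
by rewrite (nth_map 0%N) ?size_iota // nth_iota // add0n mulrDl.
Qed.

Lemma igM gs r p : ideal_gen gs p -> ideal_gen gs (r * p).
Proof.
move=> [cs ->]; exists [seq r * cs`_i | i <- iota 0 (size gs)].
rewrite mulr_sumr; apply: eq_bigr => i _.
by rewrite (nth_map 0%N) ?size_iota // nth_iota // add0n mulrA.
Qed.

Lemma igmem gs g : g \in gs -> ideal_gen gs g.
Proof.
move=> gin; have hi : (index g gs < size gs)%N by rewrite index_mem.
exists [seq (i == index g gs)%:R | i <- iota 0 (size gs)].
rewrite (bigD1 (Ordinal hi)) //= big1 => [|j /eqP hj].
  by rewrite (nth_map 0%N) ?size_iota // nth_iota // add0n eqxx mul1r nth_index // addr0.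
rewrite (nth_map 0%N) ?size_iota // nth_iota // add0n.
have -> : (j == index g gs :> nat) = false.
  by apply/negbTE/eqP => e; apply: hj; apply: val_inj.
by rewrite mul0r.
Qed.

Lemma igsub gs hs p : (forall g, g \in gs -> ideal_gen hs g) ->
  ideal_gen gs p -> ideal_gen hs p.
Proof.
move=> H [cs ->]; apply: (big_ind (ideal_gen hs)) => //.
- exact: ig0.
- by move=> x y; apply: igD.
by move=> i _; apply: igM; apply: H; apply: mem_nth.
Qed.

Lemma igmulr gs hs p q : (forall g, g \in gs -> ideal_gen hs (g * q)) ->
  ideal_gen gs p -> ideal_gen hs (p * q).
Proof.
move=> H [cs ->]; rewrite mulr_suml; apply: (big_ind (ideal_gen hs)) => //.
- exact: ig0.
- by move=> x y; apply: igD.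
by move=> i _; rewrite -mulrA; apply: igM; apply: H; apply: mem_nth.
Qed.

Lemma mcoeffMX0 p a z : ~~ (a <= z)%MM -> (p * 'X_[a])@_z = 0.
Proof.
move=> h; apply/eqP; rewrite mcoeff_eq0 (perm_mem (msuppMX p a)).
by apply/mapP => [[m' _ hz]]; move: h; rewrite hz lem_addr.
Qed.

Lemma ig_coef (I : eqType) (xs : seq I) (f : I -> 'X_{1..n}) q z :
  ideal_gen [seq 'X_[f x] | x <- xs] q -> q@_z != 0 ->
  exists2 x, x \in xs & (f x <= z)%MM.
Proof.
move=> [cs ->] nz.
have /hasP[x xin hx] : has (fun x => (f x <= z)%MM) xs; last by exists x.
apply/negPn/negP => /hasPn H; move/eqP: nz; apply.
rewrite raddf_sum big1 // => i _.
have := mem_nth 0 (ltn_ord i); move=> /mapP[x xin ->].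
by apply: mcoeffMX0; apply: H.
Qed.

Definition mF (F : {set 'I_n}) : 'X_{1..n} := [multinom ((i \in F) : nat) | i < n].

Lemma mFE F i : mF F i = (i \in F).
Proof. by rewrite mnmE. Qed.

Lemma xFE F : xF K F = 'X_[mF F].
Proof.
rewrite /xF mprodXE; congr ('X_[_]); apply/mnmP => i.
rewrite mnm_sumE mFE.
rewrite (eq_bigr (fun j => nat_of_bool (j == i))) => [|j _]; last by rewrite mnm1E.
case: (boolP (i \in F)) => hi.
  rewrite (bigD1 i) //= eqxx big1 // => j /andP[_ /negbTE ->] //.
rewrite big1 // => j hj; have -> // : (j == i) = false.
by apply/negbTE/eqP => e; move: hi; rewrite -e hj.
Qed.

Lemma mF_le A B : (mF A <= mF B)%MM = (A \subset B).
Proof.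
apply/mnm_lepP/subsetP => h.
  by move=> i hi; move: (h i); rewrite !mFE hi; case: (i \in B).
by move=> i; rewrite !mFE; case: (boolP (i \in A)) => // /h ->.
Qed.

Lemma lem_anti (a b : 'X_{1..n}) : (a <= b)%MM -> (b <= a)%MM -> a = b.
Proof.
move=> /mnm_lepP h1 /mnm_lepP h2; apply/mnmP => i.
by apply/eqP; rewrite eqn_leq h1 h2.
Qed.

Lemma mpolyX_inj (a b : 'X_{1..n}) : 'X_[a] = 'X_[b] :> P -> a = b.
Proof. by move=> e; rewrite -(mleadXm K a) e mleadXm. Qed.

Lemma xF_inj : injective (xF K (n:=n)).
Proof.
move=> A B; rewrite !xFE => /mpolyX_inj e.
by apply/eqP; rewrite eqEsubset -!mF_le e lepm_refl.
Qed.

End Basics.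
Section Sets.
Variable n : nat.
Implicit Types (Sigma : {set {set 'I_n}}).

Definition Cset Sigma k := [set F : {set 'I_n} | (#|F| == k) && (F \notin Sigma)].

Lemma facets_skel Sigma k : facets (skel_bar Sigma k) = Cset Sigma k.+1.
Proof.
apply/setP => F; rewrite /facets !inE; apply/idP/idP.
  case/andP => /existsP[G /and3P[cG sG FG]] /forallP h.
  have : ~~ (F \proper G).
    by apply: (implyP (h G)); rewrite inE; apply/existsP; exists G; rewrite cG sG subxx.
  by rewrite properEneq FG andbT negbK => /eqP ->; rewrite cG sG.
case/andP => cF sF; apply/andP; split.
  by apply/existsP; exists F; rewrite cF sF subxx.
apply/forallP => H; apply/implyP; rewrite inE => /existsP[G /and3P[cG _ HG]].
apply/negP => FH; have := proper_card FH; have := subset_leq_card HG.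
move/eqP: cG => ->; move/eqP: cF => ->; lia.
Qed.

Lemma flag_edge Sigma : is_flag Sigma -> forall F, F \notin Sigma ->
  exists2 e, e \in Cset Sigma 2 & e \subset F.
Proof.
move=> [sc fl] F hF.
case: (@arg_minnP _ F (fun G => (G \subset F) && (G \notin Sigma)) (fun G => #|G|)).
  by rewrite subxx hF.
move=> G /andP[GF GS] Gmin; exists G => //; rewrite inE GS andbT; apply/eqP.
apply: fl => // H HG; apply/negPn/negP => HS.
have := Gmin H; rewrite HS (subset_trans (proper_sub HG) GF) => /(_ isT).
by rewrite leqNgt proper_card.
Qed.

Definition sw (w : {set 'I_n}) := (\sum_(i in w) (i : nat))%N.
Definition Kb := (n * n).+1.

Lemma sw_lt w : (sw w < Kb)%N.
Proof.
rewrite /sw /Kb ltnS.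
apply: (@leq_trans (\sum_(i in w) n)%N).
  by apply: leq_sum => i _; apply: ltnW.
rewrite sum_nat_const; have := max_card w; rewrite card_ord => h.
by apply: leq_mul.
Qed.

Lemma swap_exists (y w : {set 'I_n}) : #|y| = #|w| -> y != w -> (sw y <= sw w)%N ->
  exists v t, [/\ v \in y, v \notin w, t \in w, t \notin y & (v < t)%N].
Proof.
move=> cyw nyw syw.
set A := y :\: w; set B := w :\: y.
have cAB : #|A| = #|B|.
  have := cardsID w y; have := cardsID y w; rewrite [w :&: y]setIC; move=> h1 h2; move: cyw; rewrite -h1 -h2 /=. rewrite /A /B; lia.
have sAB : (sw A <= sw B)%N.
  have e1 : sw y = (sw (y :&: w) + sw A)%N by rewrite /sw (@big_setID _ _ _ _ y w).
  have e2 : sw w = (sw (w :&: y) + sw B)%N by rewrite /sw (@big_setID _ _ _ _ w y).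
  move: syw; rewrite e1 e2 setIC; lia.
have A0 : (0 < #|A|)%N.
  rewrite lt0n cards_eq0 setD_eq0; apply/negP => yw; move: nyw.
  by rewrite eqEcard yw cyw leqnn.
have : [exists v in A, [exists t in B, (v < t)%N]].
  apply: contraT; rewrite negb_exists_in => /forall_inP H.
  have H' : forall v t, v \in A -> t \in B -> (t < v)%N.
    move=> v t vA tB; have := H v vA; rewrite negb_exists_in => /forall_inP /(_ t tB).
    rewrite -leqNgt leq_eqVlt => /orP[/eqP/val_inj e|//].
    by move: vA tB; rewrite !inE e; case: (v \in w); case: (v \in y).
  set M := (\max_(t in B) (t : nat))%N.
  have h1 : (sw B <= #|B| * M)%N.
    rewrite /sw -sum_nat_const; apply: leq_sum => t tB.
    by rewrite /M; apply: leq_bigmax_cond.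
  have h2 : (#|A| * M.+1 <= sw A)%N.
    rewrite /sw -sum_nat_const; apply: leq_sum => v vA.
    have : (M <= v.-1)%N.
      apply/bigmax_leqP => t tB; have := H' v t vA tB; lia.
    have : (0 < #|B|)%N by rewrite -cAB.
    case/card_gt0P => t tB; have := H' v t vA tB; lia.
  move: h1 h2 sAB A0; rewrite cAB; nia.
case/exists_inP => v; rewrite inE => /andP[vw vy] /exists_inP[t]; rewrite inE.
by case/andP => ty tw vt; exists v, t.
Qed.

Lemma sw_swap (w : {set 'I_n}) v t : v \notin w -> t \in w ->
  (sw (v |: (w :\ t)) + t = sw w + v)%N.
Proof.
move=> vw tw; rewrite /sw big_setU1 /=; last by rewrite inE negb_and vw orbT.
rewrite (big_setD1 t tw) /=; lia.
Qed.

Lemma card_swap (w : {set 'I_n}) v t : v \notin w -> t \in w ->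
  #|v |: (w :\ t)| = #|w|.
Proof.
move=> vw tw; rewrite cardsU1 inE negb_and vw orbT (cardsD1 t w) tw; lia.
Qed.

Section Main.
Variables (Sigma : {set {set 'I_n}}) (us : seq {set 'I_n}) (d : nat).
Hypothesis hsc : simplicial_complex Sigma.
Hypothesis hU1 : forall u, u \in us -> u \in Cset Sigma 2.
Hypothesis hcov : forall F, F \notin Sigma -> has (fun u : {set 'I_n} => u \subset F) us.
Hypothesis hU3 : forall i j, (i < size us)%N -> (j < i)%N -> exists k v,
  [/\ (k < i)%N, v \in nth set0 us j, v \notin nth set0 us i &
      nth set0 us k \subset v |: nth set0 us i].
Hypothesis hd : (2 <= d)%N.

Definition mw (w : {set 'I_n}) := find (fun u : {set 'I_n} => u \subset w) us.
Definition key (w : {set 'I_n}) := (mw w * Kb + sw w)%N.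
Definition leK := fun a b : {set 'I_n} => (key a <= key b)%N.
Definition sq := sort leK (enum (Cset Sigma d)).

Lemma mem_sq F : (F \in sq) = (F \in Cset Sigma d).
Proof. by rewrite mem_sort mem_enum. Qed.

Lemma uniq_sq : uniq sq.
Proof. by rewrite sort_uniq enum_uniq. Qed.

Lemma sq_le i j : (i < size sq)%N -> (j <= i)%N ->
  (key (nth set0 sq j) <= key (nth set0 sq i))%N.
Proof.
move=> hi hji.
have tr : transitive leK by move=> b a c; apply: leq_trans.
have rf : reflexive leK by move=> a; apply: leqnn.
have so : sorted leK sq by apply: sort_sorted => a b; apply: leq_total.
apply: (sorted_leq_nth tr rf set0 so) => //; rewrite inE //.
exact: leq_ltn_trans hji hi.
Qed.

Lemma take_mem1 i y : (i < size sq)%N -> y \in take i sq ->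
  [/\ y \in sq, (key y <= key (nth set0 sq i))%N & y != nth set0 sq i].
Proof.
move=> hi /(nthP set0) [j]; rewrite size_take hi => hj.
rewrite nth_take // => <-; split.
- by apply: mem_nth; apply: ltn_trans hi.
- by apply: sq_le => //; apply: ltnW.
by rewrite nth_uniq ?uniq_sq //; [rewrite neq_ltn hj | apply: ltn_trans hi].
Qed.

Lemma take_mem2 i y : (i < size sq)%N -> y \in sq ->
  (key y < key (nth set0 sq i))%N -> y \in take i sq.
Proof.
move=> hi /(nthP set0) [j hj <-] hk.
case: (ltnP j i) => hji.
  rewrite -(nth_take set0 hji); apply: mem_nth; rewrite size_take hi //.
by have := sq_le hj hji; rewrite leqNgt hk.
Qed.

Lemma key_lt (a b : {set 'I_n}) : (mw a < mw b)%N -> (key a < key b)%N.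
Proof.
move=> h; have h1 : ((mw a).+1 * Kb <= mw b * Kb)%N by rewrite leq_mul2r h orbT.
have := sw_lt a; rewrite /key mulSn in h1 *; lia.
Qed.

Lemma key_mw (a b : {set 'I_n}) : (key a <= key b)%N -> (mw a <= mw b)%N.
Proof. by move=> h; rewrite leqNgt; apply/negP => /key_lt; rewrite ltnNge h. Qed.

Lemma mw_le k (w : {set 'I_n}) : (k < size us)%N -> nth set0 us k \subset w -> (mw w <= k)%N.
Proof.
move=> hk hsub; rewrite leqNgt; apply/negP => /(before_find set0).
by rewrite hsub.
Qed.

Lemma mw_spec (w : {set 'I_n}) : w \notin Sigma -> (mw w < size us)%N /\ nth set0 us (mw w) \subset w.
Proof.
move=> hw; have hh := hcov hw; split; first by rewrite -has_find.
exact: (nth_find set0 hh).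
Qed.

Lemma claimA i y : (i < size sq)%N -> y \in take i sq ->
  exists v, [/\ v \in y, v \notin nth set0 sq i &
    exists2 t, t \in nth set0 sq i & v |: (nth set0 sq i :\ t) \in take i sq].
Proof.
move=> hi hy; set w := nth set0 sq i.
have [ys yle ynw] := take_mem1 hi hy.
have ws : w \in sq by apply: mem_nth.
move: (ws) (ys); rewrite !mem_sq !inE => /andP[/eqP cw wS] /andP[/eqP cy yS].
have [mwlt uw] := mw_spec wS.
have [mylt uy] := mw_spec yS.
have hm := key_mw yle.
have helper : forall v t k, v \notin w -> t \in w -> (k < size us)%N ->
    nth set0 us k \subset v |: (w :\ t) ->
    (key (v |: (w :\ t)) < key w)%N -> v |: (w :\ t) \in take i sq.
  move=> v t k vw tw hk ksub hkey; apply: take_mem2 => //.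
  rewrite mem_sq inE card_swap // cw eqxx /=; apply/negP => hS.
  have := hU1 (mem_nth set0 hk); rewrite inE => /andP[_ /negP]; apply.
  exact: hsc hS ksub.
move: hm; rewrite leq_eqVlt => /orP[/eqP hme | hlt].
  have sle : (sw y <= sw w)%N by move: yle; rewrite /key hme leq_add2l.
  have [v [t [vy vw tw ty vt]]] := swap_exists (etrans cy (esym cw)) ynw sle.
  exists v; split => //; exists t => //.
  apply: (helper v t (mw w)) => //.
    apply/subsetP => x xu; rewrite !inE (subsetP uw x xu) andbT.
    apply/orP; right; apply/eqP => e; move: ty; rewrite -e.
    by move: (subsetP uy x); rewrite hme => /(_ xu) ->.
  have hmw : (mw (v |: (w :\ t)) <= mw w)%N.
    apply: mw_le => //; apply/subsetP => x xu; rewrite !inE (subsetP uw x xu) andbT.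
    apply/orP; right; apply/eqP => e; move: ty; rewrite -e.
    by move: (subsetP uy x); rewrite hme => /(_ xu) ->.
  have h1 : (mw (v |: (w :\ t)) * Kb <= mw w * Kb)%N by rewrite leq_mul2r hmw orbT.
  have h2 := sw_swap vw tw.
  rewrite /key; lia.
have [k [v [hk vj vi kv]]] := hU3 mwlt hlt.
have kw : ~~ (nth set0 us k \subset w) by rewrite (before_find set0 hk).
have vw : v \notin w.
  apply/negP => vw; move/negP: kw; apply; apply: subset_trans kv _.
  by rewrite subUset sub1set vw uw.
have [t tw tk] : exists2 t, t \in w & t \notin nth set0 us k.
  apply/subsetPn; apply/negP => wk; move/negP: kw; apply.
  have hkus : (k < size us)%N by apply: ltn_trans mwlt.
  have := hU1 (mem_nth set0 hkus); rewrite inE => /andP[/eqP ck _].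
  have /eqP -> // : w == nth set0 us k.
  by rewrite eqEcard wk ck cw.
have hkus : (k < size us)%N by apply: ltn_trans mwlt.
have ksub : nth set0 us k \subset v |: (w :\ t).
  apply/subsetP => x xk; move: (subsetP kv x xk); rewrite !inE => /orP[-> //| xu].
  rewrite (subsetP uw x xu) andbT; apply/orP; right; apply/eqP => e.
  by move: tk; rewrite -e xk.
exists v; split => //; first by apply: (subsetP uy); apply: vj.
exists t => //; apply: (helper v t k) => //.
apply: key_lt; apply: leq_ltn_trans hk; exact: mw_le.
Qed.

End Main.
End Sets.
Section Concl.
Variables (K : fieldType) (n : nat).
Variables (Sigma : {set {set 'I_n}}) (us : seq {set 'I_n}) (d : nat).
Hypothesis hsc : simplicial_complex Sigma.
Hypothesis hU1 : forall u, u \in us -> u \in Cset Sigma 2.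
Hypothesis hcov : forall F, F \notin Sigma -> has (fun u : {set 'I_n} => u \subset F) us.
Hypothesis hU3 : forall i j, (i < size us)%N -> (j < i)%N -> exists k v,
  [/\ (k < i)%N, v \in nth set0 us j, v \notin nth set0 us i &
      nth set0 us k \subset v |: nth set0 us i].
Hypothesis hd : (2 <= d)%N.
Local Notation P := {mpoly K[n]}.

Lemma map_xFE (s : seq {set 'I_n}) : map (@xF K n) s = [seq 'X_[mF x] | x <- s] :> seq P.
Proof. by apply: eq_map => F; rewrite xFE. Qed.

Lemma concl (I : P -> Prop) :
  (forall p, I p <-> ideal_gen (map (@xF K n) (enum (Cset Sigma d))) p) ->
  linear_quotients I.
Proof.
move=> hI; set s := sq Sigma us d.
have ms : forall F, (F \in s) = (F \in Cset Sigma d) by move=> F; apply: mem_sq.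
exists (map (@xF K n) s); split.
- by rewrite (map_inj_uniq (@xF_inj K n)) uniq_sq.
- move=> i; rewrite size_map => hi; rewrite (nth_map set0) // xFE.
  by exists (mF (nth set0 s i)).
- move=> i j; rewrite size_map => hi hj hij [r].
  rewrite !(nth_map set0) // !xFE => e.
  have hle : (mF (nth set0 s j) <= mF (nth set0 s i))%MM.
    apply/negPn/negP => h; have := mcoeffMX0 r h.
    by rewrite -e mcoeffX eqxx => /eqP; rewrite oner_eq0.
  move: hle; rewrite mF_le => hsub.
  have := mem_nth set0 hi; have := mem_nth set0 hj; rewrite !ms !inE.
  move=> /andP[/eqP cj _] /andP[/eqP ci _].
  have : nth set0 s j == nth set0 s i by rewrite eqEcard hsub /= cj ci.
  by rewrite nth_uniq ?uniq_sq // eq_sym (negbTE hij).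
- move=> p; rewrite hI; split; apply: igsub => g gin; apply: igmem.
    by move/mapP: gin => [F]; rewrite mem_enum -ms => Fs ->; apply: map_f.
  by move/mapP: gin => [F]; rewrite ms -mem_enum => Fs ->; apply: map_f.
move=> i /andP[i0]; rewrite size_map => hi.
set w := nth set0 s i.
exists [seq v <- enum 'I_n | (v \notin w) && [exists t in w, v |: (w :\ t) \in take i s]].
move=> p; rewrite /colon -map_take (nth_map set0) //; split.
  move=> hp; rewrite (mpolyE p) big_seq.
  apply: (big_ind (ideal_gen _)); [exact: ig0 | by move=> x y; apply: igD |].
  move=> m hm; rewrite -mul_mpolyC; apply: igM.
  have nz : (p * 'X_[mF w])@_(mF w + m) != 0 by rewrite mcoeffMX -mcoeff_msupp.
  move: hp; rewrite xFE map_xFE => hp.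
  have [y yin hy] := ig_coef hp nz.
  have [v [vy vw [t tw ht]]] := claimA hsc hU1 hcov hU3 hd hi yin.
  have hv : (U_(v) <= m)%MM.
    rewrite lep1mP; move/mnm_lepP: hy => /(_ v); rewrite mnmDE !mFE vy (negbTE vw).
    by case: (m v).
  rewrite -(submK hv) mpolyXD; apply: igM; apply: igmem; apply: map_f.
  rewrite mem_filter mem_enum andbT vw /=; apply/exists_inP; exists t => //.
move=> hp; apply: (igmulr _ hp) => g /mapP [v]; rewrite mem_filter mem_enum andbT.
case/andP => vw /exists_inP [t tw ht] ->.
have tv : t != v by apply/eqP => e; move: vw; rewrite -e tw.
have -> : 'X_[U_(v)] * xF K w = 'X_[U_(t)] * xF K (v |: (w :\ t)).
  rewrite !xFE -!mpolyXD; congr ('X_[_]); apply/mnmP => x.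
  rewrite !mnmDE !mnm1E !mFE !inE ![_ == x]eq_sym.
  case: (eqVneq x v) => [->|xv].
    by rewrite (negbTE vw) eq_sym (negbTE tv).
  case: (eqVneq x t) => [->|xt]; first by rewrite tw.
  by [].
by apply: igM; apply: igmem; apply: map_f.
Qed.

End Concl.

Section Hyp.
Variables (K : fieldType) (n : nat) (Sigma : {set {set 'I_n}}).
Local Notation P := {mpoly K[n]}.

Lemma hyp_extract (I : P -> Prop) :
  (forall p, I p <-> ideal_gen (map (@xF K n) (enum (Cset Sigma 2))) p) ->
  linear_quotients I ->
  exists us : seq {set 'I_n}, [/\ forall u, u \in us -> u \in Cset Sigma 2,
    forall e, e \in Cset Sigma 2 -> e \in us &
    forall i j, (i < size us)%N -> (j < i)%N -> exists k v,
      [/\ (k < i)%N, v \in nth set0 us j, v \notin nth set0 us i &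
          nth set0 us k \subset v |: nth set0 us i]].
Proof.
move=> hI [fs [_ hmono hanti hgen hcol]].
have gen : forall p, ideal_gen fs p <-> ideal_gen (map (@xF K n) (enum (Cset Sigma 2))) p.
  by move=> p; rewrite -hgen hI.
have fsX : forall f, f \in fs -> f = 'X_[mlead f].
  move=> f /(nthP 0) [i hi <-]; have [m ->] := hmono i hi; by rewrite mleadXm.
have fsE : [seq 'X_[mlead f] | f <- fs] = fs.
  by rewrite -[RHS]map_id; apply/eq_in_map => f /fsX <-.
have key : forall i, (i < size fs)%N -> exists2 e, e \in Cset Sigma 2 & nth 0 fs i = xF K e.
  move=> i hi; have [m fm] := hmono i hi.
  have h1 : ideal_gen (map (@xF K n) (enum (Cset Sigma 2))) (nth 0 fs i).
    by apply/gen; apply: igmem; apply: mem_nth.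
  rewrite map_xFE fm in h1.
  have nz : ('X_[m] : P)@_m != 0 by rewrite mcoeffX eqxx oner_eq0.
  have [e ein hle] := ig_coef h1 nz.
  have h2 : ideal_gen fs (xF K e) by apply/gen; apply: igmem; apply: map_f.
  rewrite -fsE xFE in h2.
  have nz2 : ('X_[mF e] : P)@_(mF e) != 0 by rewrite mcoeffX eqxx oner_eq0.
  have [g gin hg] := ig_coef h2 nz2.
  move/(nthP 0): gin => [j hj gj].
  have hgm : (mlead g <= m)%MM by apply: lepm_trans hle.
  have eji : j = i.
    apply/eqP; apply/negPn/negP => hij; apply: (hanti i j hi hj); first by rewrite eq_sym.
    exists 'X_[m - mlead g]; rewrite fm gj {2}(fsX g) -?mpolyXD ?submK //.
    by rewrite -gj; apply: mem_nth.
  move: gj; rewrite eji fm => gm; have gm2 : mlead g = m by rewrite -gm mleadXm.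
  rewrite gm2 in hg.
  exists e; first by rewrite mem_enum in ein.
  by rewrite xFE (lem_anti hle hg).
pose us := [seq odflt set0 [pick e in Cset Sigma 2 | xF K e == f] | f <- fs].
have usP : forall i, (i < size fs)%N ->
    nth set0 us i \in Cset Sigma 2 /\ xF K (nth set0 us i) = nth 0 fs i.
  move=> i hi; rewrite /us (nth_map 0) //.
  case: pickP => [e /andP[ein /eqP ->] | none] //=.
  have [e ein fe] := key i hi; have := none e; by rewrite ein fe eqxx.
have szus : size us = size fs by rewrite size_map.
have usE : map (@xF K n) us = fs.
  apply: (@eq_from_nth _ 0); first by rewrite size_map.
  by move=> i; rewrite size_map szus => hi; rewrite (nth_map set0) ?szus //; case: (usP i hi).
have U1 : forall u, u \in us -> u \in Cset Sigma 2.
  by move=> u /(nthP set0) [i]; rewrite szus => hi <-; case: (usP i hi).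
exists us; split => //.
  move=> e ein.
  have h2 : ideal_gen fs (xF K e) by apply/gen; apply: igmem; apply: map_f; rewrite mem_enum.
  rewrite -usE map_xFE xFE in h2.
  have nz2 : ('X_[mF e] : P)@_(mF e) != 0 by rewrite mcoeffX eqxx oner_eq0.
  have [u uin hu] := ig_coef h2 nz2; rewrite mF_le in hu.
  have := U1 u uin; move: ein; rewrite !inE => /andP[/eqP ce _] /andP[/eqP cu _].
  have /eqP <- // : u == e by rewrite eqEcard hu ce cu.
move=> i j hi hji.
have i0 : (0 < i < size fs)%N by rewrite -szus hi andbT; apply: leq_ltn_trans hji.
have [vs hvs] := hcol i i0.
rewrite -usE -map_take (nth_map set0) // in hvs.
set ui := nth set0 us i in hvs *; set uj := nth set0 us j.
have hjt : uj \in take i us.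
  rewrite /uj -(nth_take set0 hji); apply: mem_nth; by rewrite size_take hi.
have hp : ideal_gen [seq 'X_v | v <- vs] (xF K (uj :\: ui)).
  apply/hvs; rewrite /colon.
  have -> : xF K (uj :\: ui) * xF K ui = xF K (ui :\: uj) * xF K uj.
    rewrite !xFE -!mpolyXD; congr ('X_[_]); apply/mnmP => x.
    rewrite !mnmDE !mFE !inE; by case: (x \in ui); case: (x \in uj).
  by apply: igM; apply: igmem; apply: map_f.
rewrite xFE in hp.
have nz : ('X_[mF (uj :\: ui)] : P)@_(mF (uj :\: ui)) != 0 by rewrite mcoeffX eqxx oner_eq0.
have [v vin hv] := ig_coef hp nz.
have hvin : v \in uj :\: ui by move: hv; rewrite lep1mP mFE; case: (v \in _).
move: hvin; rewrite inE => /andP[vui vuj].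
have hX : ideal_gen [seq ('X_v : P) | v <- vs] ('X_v : P) by apply: igmem; apply: map_f.
move/hvs: hX; rewrite /colon xFE -mpolyXD map_xFE => hX.
have nz3 : ('X_[U_(v) + mF ui] : P)@_(U_(v) + mF ui) != 0 by rewrite mcoeffX eqxx oner_eq0.
have [y yin hy] := ig_coef hX nz3.
move/(nthP set0): yin => [k]; rewrite size_take hi => hk.
rewrite nth_take // => yk.
exists k, v; split => //.
rewrite yk; apply/subsetP => x xy; move/mnm_lepP: hy => /(_ x).
rewrite mnmDE mnm1E !mFE xy !inE eq_sym.
by case: (x == v); case: (x \in ui).
Qed.

End Hyp.

Unset Implicit Arguments.
Theorem corollary1p5 (K : fieldType) (n : nat) (Sigma : {set {set 'I_n}}) (l : nat)
    (Delta Delta' : {set {set 'I_n}}) :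
  is_flag Sigma -> (0 < l)%N ->
  simplicial_complex Delta -> simplicial_complex Delta' ->
  (forall p, SR_ideal K Delta p <-> facet_ideal K (skel_bar Sigma l) p) ->
  (forall p, SR_ideal K Delta' p <-> facet_ideal K (skel_bar Sigma 1) p) ->
  linear_quotients (SR_ideal K Delta') -> linear_quotients (SR_ideal K Delta).
Proof.
move=> hflag hl _ _ hD hD' hlq.
have hsc : simplicial_complex Sigma by case: hflag.
have hI' : forall p, SR_ideal K Delta' p <->
    ideal_gen (map (@xF K n) (enum (Cset Sigma 2))) p.
  by move=> p; rewrite hD' /facet_ideal facets_skel.
have [us [U1 U2 U3]] := hyp_extract hI' hlq.
have hcov : forall F, F \notin Sigma -> has (fun u : {set 'I_n} => u \subset F) us.
  move=> F hF; have [e ein eF] := flag_edge hflag hF.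
  by apply/hasP; exists e => //; apply: U2.
apply: (concl (us := us) (d := l.+1) hsc U1 hcov U3) => //.
by move=> p; rewrite hD /facet_ideal facets_skel.
Qed.
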